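(* Let $d\ge 1$ and $1\le e\le d$ be integers, let $I\subset\mathbb{Z}^e$ be a finite index set with cardinality $|I|$, and let $\delta>0$. Let $$D^\delta_I:=\left\{x=(x_i)_{i\in I}\in\left([0,1]^d\right)^I:\ \Vert x_i-x_j\Vert\ge\delta \text{ whenever } i\neq j\right\},$$ where $\Vert\cdot\Vert$ is the Euclidean norm. For $x=(x_i)_{i\in I}\in([0,1]^d)^I$ and $i\in I$, let $C_i(x)$ denote the Voronoi cell $$C_i(x):=\left\{\omega\in[0,1]^d:\ \Vert x_i-\omega\Vert<\Vert x_k-\omega\Vert \text{ for all } k\neq i\right\},$$ where points $\omega$ equidistant from several nearest centroids are assigned to exactly one of the corresponding cells according to the lexicographical order on $I$ (so that $(C_i(x))_{i\in I}$ is a partition of $[0,1]^d$). Let $\lambda$ be the Lebesgue measure on $[0,1]^d$ and $E^c$ the complement of $E$ in $[0,1]^d$. For $0<\alpha<\delta/2$, $x\in D^\delta_I$ and $i\in I$, let $$U^\alpha_i(x)=\left\{\omega\in[0,1]^d:\ \exists\, y\in D^\delta_I \text{ with } y_j=x_j \text{ for all } j\neq i,\ \Vert x_i-y_i\Vert<\alpha,\ \text{and } \omega\in C_i(y)^c\cap C_i(x)\right\}.$$ Then $$\sup_{x\in D^\delta_I}\lambda\left(U^\alpha_i(x)\right)<\left(|I|-1\right)\left(\frac{2\alpha}{\delta}+\alpha\right)\left(\sqrt{2}\right)^{d-1}.$$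
   Context: $U^\alpha_i(x)$ is the set of points that leave the Voronoi cell of unit $i$ when the centroid $x_i$ alone is moved by less than $\alpha$ (staying in $D^\delta_I$). *)

(* Defs.v *)
From HB Require Import structures.
From mathcomp Require Import all_boot all_order all_algebra.
From mathcomp Require Import all_classical all_reals all_analysis.
Set Implicit Arguments. Unset Strict Implicit. Unset Printing Implicit Defensive.
Import Order.TTheory GRing.Theory Num.Theory.
Local Open Scope classical_set_scope.
Local Open Scope ring_scope.

(* Points of R^d are functions 'I_d -> R; indices are integer row vectors
   in Z^e; a configuration is a function from Z^e to points (only its values
   on the finite index set I matter). *)

Section Defs.
Variable R : realType.

Definition enorm (d : nat) (v : 'I_d -> R) : R :=
  Num.sqrt (\sum_(j < d) v j ^+ 2).

Definition edist (d : nat) (v w : 'I_d -> R) : R := enorm (fun j => v j - w j).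

Definition cube (d : nat) : set ('I_d -> R) := [set w | forall j, 0 <= w j <= 1].

Definition lexlt (e : nat) (a b : 'rV[int]_e) : Prop :=
  exists k : 'I_e, (forall j : 'I_e, (j < k)%N -> a ord0 j = b ord0 j)
                   /\ (a ord0 k < b ord0 k)%R.

Definition Dset (d e : nat) (I : seq 'rV[int]_e) (delta : R) :
    set ('rV[int]_e -> 'I_d -> R) :=
  [set x | (forall i, i \in I -> cube (x i)) /\
           (forall i j, i \in I -> j \in I -> i <> j -> delta <= edist (x i) (x j))].

Definition cell (d e : nat) (I : seq 'rV[int]_e) (x : 'rV[int]_e -> 'I_d -> R)
    (i : 'rV[int]_e) : set ('I_d -> R) :=
  [set w | cube w /\
     forall k, k \in I -> k <> i ->
       edist (x i) w < edist (x k) w \/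
       (edist (x i) w = edist (x k) w /\ lexlt i k)].

Definition Uset (d e : nat) (I : seq 'rV[int]_e) (delta alpha : R)
    (x : 'rV[int]_e -> 'I_d -> R) (i : 'rV[int]_e) : set ('I_d -> R) :=
  [set w | cube w /\ exists y, Dset I delta y /\
      (forall j, j \in I -> j <> i -> y j = x j) /\
      edist (x i) (y i) < alpha /\
      ~ cell I y i w /\ cell I x i w].

(* Lebesgue (outer) measure on R^d: infimum of total volumes of countable
   covers by half-open boxes [a,b). It agrees with Lebesgue measure on
   Lebesgue-measurable sets. *)
Definition box (d : nat) (a b : 'I_d -> R) : set ('I_d -> R) :=
  [set w | forall j, a j <= w j < b j].

Definition boxvol (d : nat) (a b : 'I_d -> R) : R :=
  \prod_(j < d) Num.max (b j - a j) 0.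

Definition leb_outer (d : nat) (A : set ('I_d -> R)) : \bar R :=
  ereal_inf [set (\sum_(0 <= k <oo) (boxvol (ab.1 k) (ab.2 k))%:E)%E
            | ab in [set ab : (nat -> 'I_d -> R) * (nat -> 'I_d -> R) |
                      A `<=` \bigcup_k box (ab.1 k) (ab.2 k)]].

End Defs.

(* Main.v *)
Require Import Defs.
From HB Require Import structures.
From mathcomp Require Import all_boot all_order all_algebra.
From mathcomp Require Import all_classical all_reals all_analysis.
From mathcomp Require Import ring lra zify.
Import Order.TTheory GRing.Theory Num.Theory.
Set Implicit Arguments. Unset Strict Implicit.
Local Open Scope classical_set_scope.
Local Open Scope ring_scope.

Definition cov (R : realType) (d : nat) (A : set ('I_d -> R)) (v : R) : Prop :=
  exists M (lo hi : nat -> 'I_d -> R),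
    A `<=` (fun w => exists2 k, (k < M)%N & box (lo k) (hi k) w) /\
    \sum_(0 <= k < M) boxvol (lo k) (hi k) <= v.

Lemma cov_leb (R : realType) (d : nat) (A : set ('I_d -> R)) (v : R) :
  (0 < d)%N -> cov A v -> (leb_outer A <= v%:E)%E.
Proof.
move=> d0 [M [lo [hi [HA Hs]]]].
pose lo' := fun k => if (k < M)%N then lo k else (fun _ : 'I_d => 0 : R).
pose hi' := fun k => if (k < M)%N then hi k else (fun _ : 'I_d => 0 : R).
apply: le_trans; first apply: ereal_inf_lbound.
  exists (lo', hi') => //= w /HA [k kM Hk]; exists k => //.
  by rewrite /lo' /hi' kM.
rewrite /= (nneseries_split 0 M); last first.
  move=> k _; rewrite lee_fin /boxvol; apply: prodr_ge0 => j _.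
  by rewrite le_max lexx orbT.
rewrite (@eseries0 _ _ (0 + M)%N) ?adde0; last first.
  move=> k; rewrite add0n => kM _; rewrite /lo' /hi' ltnNge kM /=.
  rewrite /boxvol (bigD1 (Ordinal d0)) //= subrr maxxx mul0r //.
rewrite sumEFin lee_fin add0n; apply: le_trans Hs; rewrite le_eqVlt; apply/orP; left.
apply/eqP; apply: eq_big_nat => k /andP [_ kM].
by rewrite /lo' /hi' kM.
Qed.

Lemma cov_sub (R : realType) (d : nat) (A B : set ('I_d -> R)) (v : R) :
  A `<=` B -> cov B v -> cov A v.
Proof.
move=> AB [M [lo [hi [HB Hs]]]]; exists M, lo, hi; split => //.
by move=> w /AB /HB.
Qed.

Lemma cov_le (R : realType) (d : nat) (A : set ('I_d -> R)) (v v' : R) :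
  v <= v' -> cov A v -> cov A v'.
Proof.
move=> vv [M [lo [hi [HB Hs]]]]; exists M, lo, hi; split => //.
exact: le_trans vv.
Qed.

Lemma cov_union (R : realType) (d : nat) (A B : set ('I_d -> R)) (v1 v2 : R) :
  cov A v1 -> cov B v2 -> cov (A `|` B) (v1 + v2).
Proof.
move=> [M1 [lo1 [hi1 [H1 S1]]]] [M2 [lo2 [hi2 [H2 S2]]]].
exists (M1 + M2)%N, (fun k => if (k < M1)%N then lo1 k else lo2 (k - M1)%N),
  (fun k => if (k < M1)%N then hi1 k else hi2 (k - M1)%N); split.
  move=> w [/H1 [k kM Hk]|/H2 [k kM Hk]].
    by exists k; [rewrite ltn_addr | rewrite kM].
  exists (k + M1)%N; first by rewrite addnC ltn_add2l.
  by rewrite ltnNge leq_addl /= addnK.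
rewrite (@big_cat_nat _ _ _ M1) ?leq_addr //=.
apply: lerD.
  apply: le_trans S1; rewrite le_eqVlt; apply/orP; left; apply/eqP.
  by apply: eq_big_nat => k /andP [_ ->].
rewrite -{1}(add0n M1) big_addn addKn.
apply: le_trans S2; rewrite le_eqVlt; apply/orP; left; apply/eqP.
apply: eq_big_nat => k _.
by rewrite ltnNge leq_addl /= addnK.
Qed.

Lemma cov0 (R : realType) (d : nat) : cov (@set0 ('I_d -> R)) 0.
Proof. by exists 0%N, (fun _ _ => 0), (fun _ _ => 0); split; [by move=> w | by rewrite big_geq]. Qed.

Lemma cov_bigU (R : realType) (d : nat) (T : eqType) (F : T -> set ('I_d -> R))
  (v : R) (L : seq T) :
  (forall k, k \in L -> cov (F k) v) ->
  cov [set w | exists2 k, k \in L & F k w] ((size L)%:R * v).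
Proof.
elim: L => [|a L IH] H.
  apply: cov_le (cov_sub _ (cov0 _ _)); [by rewrite mul0r | by move=> w [k]].
have -> : (size (a :: L))%:R * v = v + (size L)%:R * v.
  by rewrite /= -addn1 natrD; ring.
apply: cov_sub (cov_union (H a (mem_head _ _)) (IH _)).
  move=> w [k]; rewrite in_cons => /orP [/eqP -> |kL] Hk; first by left.
  by right; exists k.
by move=> k kL; apply: H; rewrite in_cons kL orbT.
Qed.

Lemma slab_cov (R : realType) (d N : nat) (j : 'I_d.+1) (w : 'I_d.+1 -> R) (K h : R) :
  w j != 0 -> 0 <= h -> (forall l, `|w l| <= 1) ->
  cov [set om : 'I_d.+1 -> R | cube om /\ `|\sum_(l < d.+1) w l * om l - K| <= h]
      ((2 * ((h + N.+1%:R^-1 * d.+1%:R) / `|w j|) + N.+1%:R^-1)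
         * (1 + N.+1%:R^-1) ^+ d).
Proof.
move=> wj0 h0 w1.
set s := N.+1%:R^-1.
have N1 : 0 < N.+1%:R :> R by rewrite ltr0n.
have N2 : 0 < N.+2%:R :> R by rewrite ltr0n.
have s0 : 0 < s by rewrite invr_gt0.
have wj : 0 < `|w j| by rewrite normr_gt0.
set r := (h + s * d.+1%:R) / `|w j|.
have r0 : 0 <= r by rewrite divr_ge0 // addr_ge0 // mulr_ge0 // ltW.
set len := 2 * r + s.
have len0 : 0 < len by rewrite /len; lra.
set k := len / N.+2%:R.
have k0 : 0 < k by rewrite divr_gt0.
pose T := {ffun 'I_d.+1 -> 'I_N.+2}.
pose q := fun c : T => \sum_(l < d.+1 | l != j) w l * ((c l)%:R * s).
pose z := fun c : T => (K - q c) / w j.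
pose lo := fun (c : T) (l : 'I_d.+1) =>
  if l == j then z c - r + (c j)%:R * k else (c l)%:R * s.
pose hi := fun (c : T) (l : 'I_d.+1) =>
  if l == j then z c - r + (c j).+1%:R * k else (c l).+1%:R * s.
pose c0 : T := [ffun => ord0].
exists (size (enum T)), (fun n => lo (nth c0 (enum T) n)),
  (fun n => hi (nth c0 (enum T) n)); split.
- move=> om [cub Hom].
  have tl : forall l, (Num.truncn (om l * N.+1%:R) < N.+2)%N.
    move=> l; rewrite ltnS truncn_le_nat.
    have [_ ol1] := andP (cub l).
    apply: (le_lt_trans (y := N.+1%:R)); last by rewrite ltr_nat.
    by rewrite -{2}(mul1r N.+1%:R) ler_wpM2r // ltW.
  pose c1 : T := [ffun l => inord (Num.truncn (om l * N.+1%:R))].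
  have c1v : forall l, ((c1 l : nat) = Num.truncn (om l * N.+1%:R)).
    by move=> l; rewrite ffunE inordK.
  have c1b : forall l, (c1 l)%:R * s <= om l < (c1 l).+1%:R * s.
    move=> l; have [ol0 _] := andP (cub l).
    have := truncn_itv (mulr_ge0 ol0 (ltW N1)); rewrite -c1v => /andP [a b].
    by rewrite ler_pdivrMr // ltr_pdivlMr // a b.
  have Hsum : `|\sum_(l < d.+1 | l != j) w l * om l - q c1| <= s * d.+1%:R.
    rewrite /q -sumrB; apply: le_trans (ler_norm_sum _ _ _) _.
    apply: (le_trans (y := \sum_(l < d.+1 | l != j) s)).
      apply: ler_sum => l _; rewrite -mulrBr normrM.
      apply: (le_trans (ler_wpM2r (normr_ge0 _) (w1 l))); rewrite mul1r.
      have [a b] := andP (c1b l).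
      rewrite ger0_norm ?subr_ge0 //.
      rewrite -natr1 mulrDl mul1r in b; lra.
    by rewrite sumr_const cardC1 card_ord /= -[s *+ d]mulr_natr ler_pM2l // ler_nat.
  set zz := z c1.
  have Hz : `|om j - zz| <= r.
    rewrite /r ler_pdivlMr // mulrC -normrM.
    have -> : w j * (om j - zz) =
       (\sum_(l < d.+1) w l * om l - K)
       - (\sum_(l < d.+1 | l != j) w l * om l - q c1).
      rewrite (bigD1 j) //= /zz /z mulrBr (mulrC (w j) (_ / _)) divfK //.
      ring.
    apply: le_trans (ler_normB _ _) _.
    by apply: lerD.
  set y := om j - zz + r.
  have := Hz; rewrite ler_norml => /andP [Hz1 Hz2].
  have y0 : 0 <= y by rewrite /y; lra.
  have ylt : y < len by rewrite /y /len; lra.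
  have u0 : 0 <= y / k by rewrite divr_ge0 // ltW.
  have tj : (Num.truncn (y / k) < N.+2)%N.
    rewrite truncn_lt_nat // ltr_pdivrMr // /k mulrC divfK ?gt_eqF //.
  pose c : T := [ffun l => if l == j then inord (Num.truncn (y / k)) else c1 l].
  have qc : q c = q c1.
    by apply: eq_bigr => l /negbTE lj; rewrite ffunE lj.
  exists (index c (enum T)); first by rewrite index_mem mem_enum.
  rewrite nth_index ?mem_enum // => l; rewrite /lo /hi.
  case: eqP => [-> | /eqP lj].
    rewrite /z qc -/zz ffunE eqxx inordK //.
    have := truncn_itv u0 => /andP [a b].
    rewrite ler_pdivlMr // in a; rewrite ltr_pdivrMr // in b.
    rewrite -natr1 mulrDl mul1r in b *.
    rewrite /y /zz /z in a b.
    apply/andP; split; lra.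
  by rewrite ffunE (negbTE lj); apply: c1b.
- have -> : \sum_(0 <= n < size (enum T)) boxvol (lo (nth c0 (enum T) n))
              (hi (nth c0 (enum T) n)) = \sum_(c <- enum T) boxvol (lo c) (hi c).
    by rewrite (big_nth c0).
  rewrite big_enum /=.
  have Hv : forall c : T, boxvol (lo c) (hi c) = k * s ^+ d.
    move=> c; rewrite /boxvol (bigD1 j) //= /lo /hi eqxx.
    have -> : (z c - r + (c j).+1%:R * k - (z c - r + (c j)%:R * k)) = k.
      by rewrite -natr1; ring.
    rewrite max_l ?ltW //; congr (_ * _).
    rewrite (eq_bigr (fun=> s)); first by rewrite prodr_const cardC1 card_ord.
    move=> l /negbTE ->.
    have -> : (c l).+1%:R * s - (c l)%:R * s = s by rewrite -natr1; ring.
    by rewrite max_l ?ltW.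
  rewrite (eq_bigr _ (fun c _ => Hv c)) sumr_const card_ffun !card_ord.
  rewrite -mulr_natr natrX exprSr.
  have -> : 1 + s = N.+2%:R * s.
    by rewrite /s -[N.+2%:R]natr1; field; rewrite gt_eqF.
  rewrite exprMn /k le_eqVlt; apply/orP; left; apply/eqP.
  set X := N.+2%:R ^+ d; set Y := s ^+ d.
  field; by rewrite gt_eqF.
Qed.

Lemma pow_bound (R : realType) (s : R) (n : nat) :
  0 <= s -> s <= 1 -> (1 + s) ^+ n <= 1 + s * (n%:R * 2 ^+ n).
Proof.
move=> s0 s1; elim: n => [|n IH]; first by rewrite expr0 mul0r mulr0 addr0.
have Q1 : 1 <= 2 ^+ n :> R by apply: exprn_ege1; lra.
have P0 : 0 <= (1 + s) ^+ n by apply: exprn_ge0; lra.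
have t0 : 0 <= n%:R :> R by rewrite ler0n.
rewrite exprSr [2 ^+ n.+1]exprS -natr1.
set P := (1 + s) ^+ n in IH P0 *; set Q := 2 ^+ n in Q1 *; set t := n%:R in t0 *.
have h1 : P * (1 + s) <= (1 + s * (t * Q)) * (1 + s) by rewrite ler_wpM2r //; lra.
have h2 : s * s * (t * Q) <= s * (t * Q).
  by rewrite ler_wpM2r // ?mulr_ge0 //; nra.
have h3 : s * 1 <= s * (2 * Q) by rewrite ler_wpM2l //; lra.
rewrite mulr1 in h3.
have e : (1 + s * (t * Q)) * (1 + s) = 1 + s + s * (t * Q) + s * s * (t * Q) by ring.
have e2 : 1 + s * ((t + 1) * (2 * Q)) = 1 + 2 * (s * (t * Q)) + s * (2 * Q) by ring.
rewrite e2; rewrite e in h1; lra.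
Qed.

Lemma nat_bound (d : nat) : (d.+1 ^ 2 <= 4 * 2 ^ d)%N.
Proof.
elim: d => [//|d IH].
have h := ltn_expl d (isT : (1 < 2)%N).
have e2 : (2 ^ d.+1 = 2 * 2 ^ d)%N := expnS 2 d.
have e1 : (d.+2 ^ 2 = d.+1 ^ 2 + 2 * d + 3)%N.
  rewrite !expnS !expn0 !muln1; lia.
rewrite e1 e2; lia.
Qed.

Theorem lemma1 (R : realType) (d e : nat) (I : seq 'rV[int]_e)
    (delta alpha : R) (i : 'rV[int]_e) :
  (1 <= d)%N -> (1 <= e)%N -> (e <= d)%N -> uniq I -> (1 < size I)%N ->
  0 < delta -> 0 < alpha -> alpha < delta / 2 -> i \in I ->
  (ereal_sup [set leb_outer (Uset I delta alpha x i) | x in @Dset R d e I delta]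
   < (((size I)%:R - 1) * (2 * alpha / delta + alpha) * Num.sqrt 2 ^+ (d - 1))%:E)%E.
Proof.
case: d => [//|d] _ _ _ Iu In dp ap ad iI.
rewrite subn1 /=.
set n := size I.
set D := d.+1%:R : R.
have D0 : 0 < D by rewrite ltr0n.
set sD := Num.sqrt D.
have sD0 : 0 < sD by rewrite sqrtr_gt0.
have sD2 : sD ^+ 2 = D by rewrite sqr_sqrtr // ltW.
set beta := 2 * alpha * sD.
set M0 := alpha * D / delta.
have M00 : 0 <= M0 by rewrite divr_ge0 ?mulr_ge0 // ltW.
set P := (d%:R * 2 ^+ d : R).
have P0 : 0 <= P by rewrite mulr_ge0 ?ler0n // exprn_ge0.
set E := 2 * D * sD / delta + 1.
have E1 : 1 <= E by rewrite lerDr divr_ge0 ?mulr_ge0 // ltW.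
have E0 : 0 <= E by lra.
set G := E + P * M0 + P * E.
have G0 : 0 < G by rewrite /G; have := mulr_ge0 P0 M00; have := mulr_ge0 P0 E0; lra.
set N := Num.truncn (2 * G / alpha).
set s := N.+1%:R^-1 : R.
have N1 : 0 < N.+1%:R :> R by rewrite ltr0n.
have s0 : 0 < s by rewrite invr_gt0.
have s1 : s <= 1 by rewrite /s invf_le1 // ler1n.
have sG : s * G < alpha / 2.
  have := truncnS_gt (2 * G / alpha); rewrite -/N => h.
  rewrite ltr_pdivrMr // in h.
  rewrite /s mulrC ltr_pdivrMr //; lra.
set V := M0 + alpha / 2.
have key : forall x : 'rV[int]_e -> 'I_d.+1 -> R, Dset I delta x -> cov (Uset I delta alpha x i) ((n%:R - 1) * V).
  move=> x [xc xd].
  pose Rk := fun k : 'rV[int]_e => [set om : 'I_d.+1 -> R | cube om /\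
     \sum_l (x i l - om l) ^+ 2 <= \sum_l (x k l - om l) ^+ 2 /\
     \sum_l (x k l - om l) ^+ 2 < \sum_l (x i l - om l) ^+ 2 + beta].
  have sq0 : forall f : 'I_d.+1 -> R, 0 <= \sum_l f l ^+ 2.
    by move=> f; apply: sumr_ge0 => l _; apply: sqr_ge0.
  have incl : Uset I delta alpha x i `<=` [set om | exists2 k, k \in rem i I & Rk k om].
    move=> om [cub [y [[yc yd] [yx [dxy [ncy cx]]]]]].
    have [k [kI [ki Hk]]] : exists k, k \in I /\ k <> i /\
        not ((Defs.edist (y i) om < Defs.edist (y k) om) \/
           ((Defs.edist (y i) om = Defs.edist (y k) om) /\ lexlt i k)).
      apply: contrapT => Hn; apply: ncy; split => // k kI ki.
      apply: contrapT => H; apply: Hn; by exists k.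
    have yk : y k = x k by apply: yx.
    rewrite yk in Hk.
    have le1 : Defs.edist (x i) om <= Defs.edist (x k) om.
      by case: (cx.2 k kI ki) => [/ltW | [-> _]].
    have le2 : Defs.edist (x k) om <= Defs.edist (y i) om.
      by rewrite leNgt; apply/negP => H; apply: Hk; left.
    rewrite /Defs.edist /enorm ler_sqrt ?sq0 // in le1.
    rewrite /Defs.edist /enorm ler_sqrt ?sq0 // in le2.
    have lt3 : \sum_l (x i l - y i l) ^+ 2 < alpha ^+ 2.
      rewrite -(ger0_norm (ltW ap)) -sqrtr_sqr ltr_sqrt in dxy => //.
      by rewrite exprn_gt0 // normr_gt0 gt_eqF.
    exists k.
      by rewrite (mem_rem_uniq _ Iu) inE; apply/andP; split => //; apply/eqP.
    split => //; split => //.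
    apply: (le_lt_trans le2).
    set t := 2 * sD / alpha.
    have t0 : 0 < t by rewrite divr_gt0 // mulr_gt0.
    set u := t^-1.
    have tu : t * u = 1 by rewrite mulfV // gt_eqF.
    have pw : forall l, (y i l - om l) ^+ 2 - (x i l - om l) ^+ 2 <=
        t / 2 * (x i l - y i l) ^+ 2 + 2 * u.
      move=> l.
      have [a1 a2] := andP (xc i iI l); have [b1 b2] := andP (yc i iI l).
      have [c1 c2] := andP (cub l).
      set a := y i l - x i l; set b := y i l + x i l - 2 * om l.
      have ab : (y i l - om l) ^+ 2 - (x i l - om l) ^+ 2 = a * b.
        by rewrite /a /b; ring.
      have b4 : b ^+ 2 <= 4.
        have hb1 : -2 <= b by rewrite /b; lra.
        have hb2 : b <= 2 by rewrite /b; lra.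
        nra.
      have e2 : (x i l - y i l) ^+ 2 = a ^+ 2 by rewrite /a; ring.
      rewrite ab e2.
      have h1 : 0 <= (t * a - b) ^+ 2 * u by rewrite mulr_ge0 ?sqr_ge0 // invr_ge0 ltW.
      have u0 : 0 < u by rewrite invr_gt0.
      have h2 : b ^+ 2 * u <= 4 * u by rewrite ler_wpM2r // ltW.
      have e3 : (t * a - b) ^+ 2 * u = t * a ^+ 2 * (t * u) - 2 * a * b * (t * u) + b ^+ 2 * u.
        by ring.
      rewrite tu !mulr1 in e3.
      lra.
    have hs : \sum_l ((y i l - om l) ^+ 2 - (x i l - om l) ^+ 2) <=
        t / 2 * \sum_l (x i l - y i l) ^+ 2 + D * (2 * u).
      apply: le_trans (ler_sum _ (fun l _ => pw l)) _.
      by rewrite big_split /= -mulr_sumr sumr_const card_ord /D [d.+1%:R * _]mulr_natl.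
    rewrite sumrB in hs.
    have f1 : t / 2 * \sum_l (x i l - y i l) ^+ 2 < t / 2 * alpha ^+ 2.
      by rewrite ltr_pM2l // divr_gt0.
    have f2 : t / 2 * alpha ^+ 2 = sD * alpha.
      by rewrite /t; field; rewrite gt_eqF.
    have f3 : D * (2 * u) = sD * alpha.
      by rewrite /u /t -sD2; field; rewrite !gt_eqF.
    rewrite /beta; lra.
  have percov : forall k, k \in rem i I -> cov (Rk k) V.
    move=> k; rewrite (mem_rem_uniq _ Iu) inE => /andP [/eqP ki kI].
    pose w := fun l => x k l - x i l.
    have hS : delta ^+ 2 <= \sum_l w l ^+ 2.
      have h := xd i k iI kI (nesym ki).
      rewrite /Defs.edist /enorm -(ger0_norm (ltW dp)) -sqrtr_sqr ler_sqrt ?sq0 // in h.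
      apply: (le_trans h); rewrite le_eqVlt; apply/orP; left; apply/eqP.
      by apply: eq_bigr => l _; rewrite /w; ring.
    have [j hj] : exists j, delta ^+ 2 / D <= w j ^+ 2.
      apply: contrapT => Hn.
      have : \sum_(l < d.+1) w l ^+ 2 < \sum_(l < d.+1) delta ^+ 2 / D.
        apply: ltr_sum.
          by apply/hasP; exists ord0; rewrite ?mem_index_enum.
        move=> l _; rewrite ltNge; apply/negP => H; apply: Hn; by exists l.
      rewrite sumr_const card_ord -/D -mulr_natl mulrC divfK ?gt_eqF //.
      lra.
    have dD : 0 < delta ^+ 2 / D by rewrite divr_gt0 // exprn_gt0.
    have wj0 : w j != 0.
      by apply/negP => /eqP H; have := lt_le_trans dD hj; rewrite H expr2 mul0r ltxx.
    have wj : 0 < `|w j| by rewrite normr_gt0.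
    have w1 : forall l, `|w l| <= 1.
      move=> l; have [a1 a2] := andP (xc i iI l); have [b1 b2] := andP (xc k kI l).
      rewrite ler_norml /w; apply/andP; split; lra.
    have hinv : `|w j|^-1 <= sD / delta.
      have hd : delta <= `|w j| * sD.
        have n1 : delta \in Num.nneg by rewrite nnegrE ltW.
        have n2 : `|w j| * sD \in Num.nneg by rewrite nnegrE mulr_ge0 // ltW.
        rewrite -(ler_pXn2r (isT : (0 < 2)%N) n1 n2).
        rewrite exprMn sqr_sqrtr; last exact: ltW.
        rewrite real_normK ?num_real // -ler_pdivrMr //.
      rewrite ler_pdivlMr // -(ler_pM2l wj) mulrA mulfV ?gt_eqF // mul1r.
      exact: hd.
    pose Q := \sum_l (x k l ^+ 2 - x i l ^+ 2).
    have h0 : 0 <= beta / 4.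
      by rewrite /beta divr_ge0 ?mulr_ge0 // ?(ltW ap) ?(ltW sD0) //; lra.
    have H := @slab_cov R d N j w (Q / 2 - beta / 4) (beta / 4) wj0 h0 w1.
    apply: cov_le (cov_sub _ H).
      rewrite -/s -/D.
      have hI : 2 * ((beta / 4 + s * D) / `|w j|) <= 2 * (beta / 4 + s * D) * (sD / delta).
        rewrite -mulrA; apply: ler_wpM2l; first lra.
        apply: ler_wpM2l => //; rewrite addr_ge0 // mulr_ge0 // ?ltW //.
      have e1 : 2 * (beta / 4 + s * D) * (sD / delta) =
          alpha * (sD ^+ 2) / delta + s * (E - 1).
        by rewrite /beta /E; field; rewrite gt_eqF.
      rewrite sD2 in e1.
      have hp := pow_bound d (ltW s0) s1; rewrite -/P in hp.
      have I0 : 0 <= 2 * ((beta / 4 + s * D) / `|w j|) + s.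
        have : 0 <= (beta / 4 + s * D) / `|w j|.
          by rewrite divr_ge0 // addr_ge0 // mulr_ge0 // ltW.
        lra.
      have hI2 : 2 * ((beta / 4 + s * D) / `|w j|) + s <= alpha * D / delta + s * E.
        rewrite /M0 in e1; lra.
      have := ler_pM I0 (exprn_ge0 d (_ : 0 <= 1 + s)) hI2 hp.
      move=> /(_ _) hh; have {hh} hh := hh ltac:(lra).
      apply: le_trans hh _.
      have e2 : (alpha * D / delta + s * E) * (1 + s * P) =
          alpha * D / delta + s * E + s * (P * (alpha * D / delta)) + s * s * (E * P) by ring.
      have h3 : s * s * (E * P) <= s * (E * P).
        apply: ler_wpM2r; first by rewrite mulr_ge0.
        nra.
      have e3 : s * G = s * E + s * (P * (alpha * D / delta)) + s * (P * E) by rewrite /G /M0; ring.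
      have e4 : s * (E * P) = s * (P * E) by ring.
      rewrite e2 /V /M0; lra.
    move=> om [cub [hB hA]]; split => //.
    have eQ : \sum_l (x k l - om l) ^+ 2 - \sum_l (x i l - om l) ^+ 2 =
        Q - 2 * \sum_l w l * om l.
      by rewrite -sumrB /Q mulr_sumr -sumrB; apply: eq_bigr => l _; rewrite /w; ring.
    rewrite ler_norml; apply/andP; split; lra.
  apply: cov_sub incl _.
  have := cov_bigU percov.
  by rewrite size_rem // -subn1 natrB // ltnW.
apply: (le_lt_trans (y := ((n%:R - 1) * V)%:E)).
  apply: ge_ereal_sup => _ [x Dx <-]; apply: cov_leb => //; exact: key.
rewrite lte_fin -mulrA ltr_pM2l; last by rewrite subr_gt0 ltr1n.
have r2 : 1 <= Num.sqrt 2 :> R.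
  rewrite -{1}sqrtr1 ler_sqrt //; lra.
have q2 : 1 <= Num.sqrt 2 ^+ d :> R by apply: exprn_ege1.
have hD : D <= 2 * Num.sqrt 2 ^+ d.
  have h0 : 0 <= 2 * Num.sqrt 2 ^+ d :> R by rewrite mulr_ge0 // ?exprn_ge0 //; lra.
  rewrite -(ler_pXn2r (_ : (0 < 2)%N)) ?nnegrE ?(ltW D0) //.
  rewrite exprMn -exprM mulnC exprM sqr_sqrtr; last by lra.
  rewrite /D -natrX.
  have -> : (2 : R) ^+ 2 * 2 ^+ d = (4 * 2 ^ d)%:R by rewrite natrM natrX; ring.
  by rewrite ler_nat nat_bound.
have h1 : alpha / delta * D <= alpha / delta * (2 * Num.sqrt 2 ^+ d).
  by rewrite ler_wpM2l // divr_ge0 // ltW.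
have h2 : alpha * 1 < alpha * Num.sqrt 2 ^+ d + alpha / 2.
  have := ler_wpM2l (ltW ap) q2; lra.
have e1 : M0 = alpha / delta * D by rewrite /M0; field; rewrite gt_eqF.
have e2 : (2 * alpha / delta + alpha) * Num.sqrt 2 ^+ d =
  alpha / delta * (2 * Num.sqrt 2 ^+ d) + alpha * Num.sqrt 2 ^+ d.
  by field; rewrite gt_eqF.
rewrite /V e1 e2; lra.
Qed.
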